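(* Let $G$ be a locally compact group, $H$ a compact subgroup of $G$, and $X$ a proper $G$-space. (a) If $S$ is a global $H$-slice of $X$ which is a small subset of $X$, then the slicing map $f_S:X\to G/H$ is continuous and open. If in addition $S$ is compact, then $f_S$ is also closed. (b) Conversely, if $f:X\to G/H$ is a continuous equivariant map, then $S=f^{-1}(eH)$ is a global $H$-slice of $X$ which is a small subset of $X$, and $f_S=f$.
   Context: All spaces are completely regular Hausdorff. A $G$-space is a space $X$ with a continuous action $G\times X\to X$, $(g,x)\mapsto gx$, with $ex=x$ and $(gh)x=g(hx)$. A map $f:X\to Y$ between $G$-spaces is equivariant if $f(gx)=gf(x)$. $G/H$ denotes the space of left cosets $xH$ with the quotient topology and action $g(xH)=(gx)H$; $e$ is the unit of $G$. For $S\subset X$, $G(S)=\{gs\mid g\in G,s\in S\}$. For a closed subgroup $H\subset G$, a subset $S\subset X$ is an $H$-slice in $X$ if: (i) $H(S)=S$; (ii) $S$ is closed in $G(S)$; (iii) if $g\in G\setminus H$ then $gS\cap S=\emptyset$; (iv) $G(S)$ is open in $X$. It is a global $H$-slice if moreover $G(S)=X$. For an $H$-slice $S$, the slicing map $f_S:G(S)\to G/H$ is defined by $f_S(gs)=gH$ for $g\in G$, $s\in S$ (well defined by (iii)). For $U,V\subset X$ the transporter is $\langle U,V\rangle=\{g\in G\mid gU\cap V\neq\emptyset\}$; $U$ and $V$ are thin relative to each other if $\langle U,V\rangle$ has compact closure in $G$. A subset $U\subset X$ is small if every point of $X$ has a neighborhood thin relative to $U$. For $G$ locally compact, a $G$-space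 $X$ is proper if every point of $X$ has a small neighborhood. *)

(* Defs.v *)
From Stdlib Require Import Reals List ClassicalEpsilon.
Set Implicit Arguments.

Section Topology.
Variable T : Type.
Variable opens : (T -> Prop) -> Prop.

Definition is_topology : Prop :=
  opens (fun _ => True) /\
  (forall U V, opens U -> opens V -> opens (fun x => U x /\ V x)) /\
  (forall (I : Type) (F : I -> T -> Prop),
      (forall i, opens (F i)) -> opens (fun x => exists i, F i x)).

Definition is_closed (A : T -> Prop) : Prop := opens (fun x => ~ A x).

Definition closure (A : T -> Prop) : T -> Prop :=
  fun x => forall U, opens U -> U x -> exists y, U y /\ A y.

Definition nbhd (N : T -> Prop) (x : T) : Prop :=
  exists U, opens U /\ U x /\ forall y, U y -> N y.

Definition is_compact (K : T -> Prop) : Prop :=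
  forall (I : Type) (F : I -> T -> Prop),
    (forall i, opens (F i)) ->
    (forall x, K x -> exists i, F i x) ->
    exists l : list I, forall x, K x -> exists i, In i l /\ F i x.

Definition hausdorff : Prop :=
  forall x y, x <> y ->
    exists U V, opens U /\ opens V /\ U x /\ V y /\ forall z, ~ (U z /\ V z).

Definition R_open (U : R -> Prop) : Prop :=
  forall r, U r -> exists eps, (0 < eps)%R /\ forall s, (Rabs (s - r) < eps)%R -> U s.

Definition completely_regular : Prop :=
  forall (C : T -> Prop) (x : T), is_closed C -> ~ C x ->
    exists f : T -> R,
      (forall U, R_open U -> opens (fun y => U (f y))) /\
      f x = 0%R /\ (forall y, C y -> f y = 1%R).

Definition locally_compact : Prop :=
  forall x, exists K, is_compact K /\ nbhd K x.
End Topology.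

Definition continuous {A B : Type} (opA : (A -> Prop) -> Prop) (opB : (B -> Prop) -> Prop)
  (f : A -> B) : Prop :=
  forall V, opB V -> opA (fun x => V (f x)).

Definition open_map {A B : Type} (opA : (A -> Prop) -> Prop) (opB : (B -> Prop) -> Prop)
  (f : A -> B) : Prop :=
  forall U, opA U -> opB (fun y => exists x, U x /\ f x = y).

Definition closed_map {A B : Type} (opA : (A -> Prop) -> Prop) (opB : (B -> Prop) -> Prop)
  (f : A -> B) : Prop :=
  forall C, is_closed opA C -> is_closed opB (fun y => exists x, C x /\ f x = y).

Definition prod_open {A B : Type} (opA : (A -> Prop) -> Prop) (opB : (B -> Prop) -> Prop)
  (W : A * B -> Prop) : Prop :=
  forall a b, W (a, b) ->
    exists U V, opA U /\ opB V /\ U a /\ V b /\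
      forall a' b', U a' -> V b' -> W (a', b').

Definition continuous2 {A B C : Type} (opA : (A -> Prop) -> Prop)
  (opB : (B -> Prop) -> Prop) (opC : (C -> Prop) -> Prop) (f : A -> B -> C) : Prop :=
  forall W, opC W -> prod_open opA opB (fun p => W (f (fst p) (snd p))).

Record Group (G : Type) := {
  mul : G -> G -> G;
  inv : G -> G;
  one : G;
  mulA : forall x y z, mul x (mul y z) = mul (mul x y) z;
  mul1g : forall x, mul one x = x;
  mulVg : forall x, mul (inv x) x = one
}.

Section GroupStuff.
Variables (G : Type) (gr : Group G) (opG : (G -> Prop) -> Prop).

Definition topological_group : Prop :=
  continuous2 opG opG opG (mul gr) /\ continuous opG opG (inv gr).

Definition subgroup (H : G -> Prop) : Prop :=
  H (one gr) /\ (forall x y, H x -> H y -> H (mul gr x y)) /\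
  (forall x, H x -> H (inv gr x)).

Variable H : G -> Prop.

Definition coset (x : G) : G -> Prop := fun y => H (mul gr (inv gr x) y).

Definition GmodH : Type := { C : G -> Prop | exists x, C = coset x }.

Definition proj (x : G) : GmodH := exist _ (coset x) (ex_intro _ x eq_refl).

Definition quot_open (U : GmodH -> Prop) : Prop := opG (fun g => U (proj g)).

Variables (X : Type) (opX : (X -> Prop) -> Prop) (act : G -> X -> X).

Definition is_action : Prop :=
  continuous2 opG opX opX act /\
  (forall x, act (one gr) x = x) /\
  (forall g h x, act (mul gr g h) x = act g (act h x)).

(* f : X -> G/H is equivariant: f(gx) = g f(x), where g(hH) = (gh)H *)
Definition equivariant (f : X -> GmodH) : Prop :=
  forall g x h, f x = proj h -> f (act g x) = proj (mul gr g h).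

Definition saturation (S : X -> Prop) : X -> Prop :=
  fun x => exists g s, S s /\ x = act g s.

Definition H_saturation (S : X -> Prop) : X -> Prop :=
  fun x => exists h s, H h /\ S s /\ x = act h s.

Definition H_slice (S : X -> Prop) : Prop :=
  (forall x, H_saturation S x <-> S x) /\
  (* (ii) S is closed in G(S) (subspace topology) *)
  (exists C, is_closed opX C /\ forall x, saturation S x -> (S x <-> C x)) /\
  (* (iii) g not in H implies gS and S disjoint *)
  (forall g, ~ H g -> forall s, S s -> ~ S (act g s)) /\
  opX (saturation S).

Definition global_H_slice (S : X -> Prop) : Prop :=
  H_slice S /\ forall x, saturation S x.

(* slicing map f_S(gs) = gH (a representative g is chosen; well defined by (iii)) *)
Definition slicing_map (S : X -> Prop) (x : X) : GmodH :=
  proj (epsilon (inhabits (one gr)) (fun g => exists s, S s /\ act g s = x)).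

Definition transporter (U V : X -> Prop) : G -> Prop :=
  fun g => exists u, U u /\ V (act g u).

Definition thin (U V : X -> Prop) : Prop :=
  is_compact opG (closure opG (transporter U V)).

Definition small (U : X -> Prop) : Prop :=
  forall x, exists N, nbhd opX N x /\ thin N U.

Definition proper_space : Prop :=
  forall x, exists N, nbhd opX N x /\ small N.
End GroupStuff.

(* Main.v *)
Require Import Defs.
From Stdlib Require Import List Classical ClassicalEpsilon FunctionalExtensionality PropExtensionality ProofIrrelevance.

Section Topo.
Context {T : Type} (op : (T -> Prop) -> Prop) (Htop : is_topology op).

Lemma op_ext (P Q : T -> Prop) : op P -> (forall x, P x <-> Q x) -> op Q.
Proof.
  intros HP HPQ.
  assert (E : P = Q) by (apply functional_extensionality; intro x; apply propositional_extensionality; auto).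
  now subst.
Qed.

Lemma op_true : op (fun _ => True).
Proof. apply Htop. Qed.

Lemma op_and (U V : T -> Prop) : op U -> op V -> op (fun x => U x /\ V x).
Proof. intros; apply Htop; auto. Qed.

Lemma op_local (P : T -> Prop) :
  (forall x, P x -> exists U, op U /\ U x /\ forall y, U y -> P y) -> op P.
Proof.
  intros Hloc.
  destruct Htop as [_ [_ Hun]].
  set (I := {U : T -> Prop | op U /\ forall y, U y -> P y}).
  apply (op_ext (fun x => exists i : I, proj1_sig i x)).
  - apply Hun. intros [U [HU HUP]]; exact HU.
  - intro x; split.
    + intros [[U [HU HUP]] Hx]; simpl in Hx; auto.
    + intros Px. destruct (Hloc x Px) as [U [HU [Ux HUP]]].
      exists (exist _ U (conj HU HUP)); exact Ux.
Qed.

Lemma op_finite_inter {I : Type} (P : I -> T -> Prop) (l : list I) :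
  (forall i, In i l -> op (P i)) -> op (fun x => forall i, In i l -> P i x).
Proof.
  induction l as [|a l IH]; intros Hl.
  - apply (op_ext (fun _ => True)); [apply op_true|]. intro x; split; auto. intros _ i [].
  - apply (op_ext (fun x => P a x /\ (forall i, In i l -> P i x))).
    + apply op_and; [apply Hl; left; auto| apply IH; intros; apply Hl; right; auto].
    + intro x; split.
      * intros [Ha Hr] i [<-|Hi]; auto.
      * intros Hall; split; [apply Hall; left; auto| intros; apply Hall; right; auto].
Qed.

Lemma nbhd_open (N : T -> Prop) x : nbhd op N x -> exists U, op U /\ U x /\ forall y, U y -> N y.
Proof. auto. Qed.

Lemma compact_closed (M : T -> Prop) : hausdorff op -> is_compact op M -> is_closed op M.
Proof.
  intros Hh Hc. unfold is_closed. apply op_local. intros y Hy.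
  set (I := {p : (T -> Prop) * (T -> Prop) | op (fst p) /\ op (snd p) /\ snd p y /\ forall z, ~ (fst p z /\ snd p z)}).
  destruct (Hc I (fun i => fst (proj1_sig i))) as [l Hl].
  - intros [p [? ?]]; auto.
  - intros m Hm. assert (m <> y) by (intro; subst; auto).
    destruct (Hh m y H) as [U [V [HU [HV [Um [Vy Hd]]]]]].
    exists (exist _ (U, V) (conj HU (conj HV (conj Vy Hd)))); exact Um.
  - exists (fun z => forall i, In i l -> snd (proj1_sig i) z). split; [|split].
    + apply op_finite_inter. intros [p [? [? ?]]] _; auto.
    + intros [p [? [? [? ?]]]] _; auto.
    + intros z Hz Mz. destruct (Hl z Mz) as [i [Hi Fi]].
      specialize (Hz i Hi). destruct i as [p [? [? [? Hd]]]]. simpl in *. exact (Hd z (conj Fi Hz)).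
Qed.

Lemma sub_closure (A : T -> Prop) x : A x -> closure op A x.
Proof. intros Ax U _ Ux; eauto. Qed.

Lemma closure_compact (A M : T -> Prop) : hausdorff op -> is_compact op M ->
  (forall x, A x -> M x) -> is_compact op (closure op A).
Proof.
  intros Hh Hc HAM.
  assert (HMc := compact_closed M Hh Hc).
  assert (Hsub : forall x, closure op A x -> M x).
  { intros x Hx. apply NNPP; intro nM. destruct (Hx _ HMc nM) as [y [ny Ay]]. auto. }
  assert (Hcl : op (fun x => ~ closure op A x)).
  { apply op_local. intros x Hx. unfold closure in Hx.
    apply not_all_ex_not in Hx. destruct Hx as [U HU].
    apply imply_to_and in HU. destruct HU as [HU HU2]. apply imply_to_and in HU2. destruct HU2 as [Ux HU2].
    exists U; split; [auto|split; [auto|]]. intros y Uy Hy. destruct (Hy U HU Uy) as [z [Uz Az]]. apply HU2; eauto. }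
  intros I F HF Hcov.
  destruct (Hc (option I) (fun o => match o with None => fun x => ~ closure op A x | Some i => F i end)) as [l Hl].
  - intros [i|]; auto.
  - intros x Mx. destruct (classic (closure op A x)) as [Hx|Hx].
    + destruct (Hcov x Hx) as [i Hi]. exists (Some i); auto.
    + exists None; auto.
  - exists (flat_map (fun o => match o with None => nil | Some i => i :: nil end) l).
    intros x Hx. destruct (Hl x (Hsub x Hx)) as [[i|] [Hi Fi]].
    + exists i; split; auto. apply in_flat_map. exists (Some i); split; auto. left; auto.
    + contradiction.
Qed.
End Topo.

Lemma cont2_l {A B C : Type} (opA : (A -> Prop) -> Prop) opB (opC : (C -> Prop) -> Prop) (f : A -> B -> C) :
  is_topology opA -> continuous2 opA opB opC f -> forall b, continuous opA opC (fun a => f a b).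
Proof.
  intros HA Hf b W HW. apply (op_local opA HA). intros a Ha.
  destruct (Hf W HW a b Ha) as [U [V [HU [HV [Ua [Vb HUV]]]]]].
  exists U; split; [auto|split; [auto|]]. intros a' Ua'. apply (HUV a' b); auto.
Qed.

Lemma cont2_r {A B C : Type} (opA : (A -> Prop) -> Prop) opB (opC : (C -> Prop) -> Prop) (f : A -> B -> C) :
  is_topology opB -> continuous2 opA opB opC f -> forall a, continuous opB opC (fun b => f a b).
Proof.
  intros HB Hf a W HW. apply (op_local opB HB). intros b Hb.
  destruct (Hf W HW a b Hb) as [U [V [HU [HV [Ua [Vb HUV]]]]]].
  exists V; split; [auto|split; [auto|]]. intros b' Vb'. apply (HUV a b'); auto.
Qed.

Lemma compact_image2 {A B C : Type} (opA : (A -> Prop) -> Prop) (opB : (B -> Prop) -> Prop)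
  (opC : (C -> Prop) -> Prop) (f : A -> B -> C) :
  is_topology opA -> is_topology opB ->
  continuous2 opA opB opC f -> forall P Q, is_compact opA P -> is_compact opB Q ->
  is_compact opC (fun z => exists a b, P a /\ Q b /\ z = f a b).
Proof.
  intros HA HB Hf P Q HP HQ I F HF Hcov.
  set (J := {p : (A -> Prop) * (B -> Prop) * I | opA (fst (fst p)) /\ opB (snd (fst p)) /\
            forall a b, fst (fst p) a -> snd (fst p) b -> F (snd p) (f a b)}).
  set (K := {p : A * list J | P (fst p) /\ (forall j, In j (snd p) -> fst (fst (proj1_sig j)) (fst p)) /\
            forall b, Q b -> exists j, In j (snd p) /\ snd (fst (proj1_sig j)) b}).
  destruct (HP K (fun k => fun a' => forall j, In j (snd (proj1_sig k)) -> fst (fst (proj1_sig j)) a')) as [L HL].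
  - intros k. apply (op_finite_inter opA HA). intros [[[U V] i] [HU [HV ?]]] _; auto.
  - intros a Pa.
    set (J' := {j : J | fst (fst (proj1_sig j)) a}).
    destruct (HQ J' (fun j => snd (fst (proj1_sig (proj1_sig j))))) as [l Hl].
    + intros [[[[U V] i] [HU [HV Hs]]] Ha]; simpl; auto.
    + intros b Qb. destruct (Hcov (f a b)) as [i Hi]; [exists a, b; auto|].
      destruct (Hf (F i) (HF i) a b Hi) as [U [V [HU [HV [Ua [Vb HUV]]]]]].
      set (j0 := exist (fun p : (A -> Prop) * (B -> Prop) * I => opA (fst (fst p)) /\ opB (snd (fst p)) /\
            forall a b, fst (fst p) a -> snd (fst p) b -> F (snd p) (f a b)) (U, V, i) (conj HU (conj HV HUV))).
      exists (exist (fun j : J => fst (fst (proj1_sig j)) a) j0 Ua). simpl; auto.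
    + assert (Hk : P a /\ (forall j, In j (map (@proj1_sig _ _) l) -> fst (fst (proj1_sig j)) a) /\
            forall b, Q b -> exists j, In j (map (@proj1_sig _ _) l) /\ snd (fst (proj1_sig j)) b).
      { split; [auto|split].
        - intros j Hj. apply in_map_iff in Hj. destruct Hj as [[j' Hj'] [<- _]]. exact Hj'.
        - intros b Qb. destruct (Hl b Qb) as [j [Hj Hb]]. exists (proj1_sig j); split; auto. apply in_map; auto. }
      exists (exist _ (a, map (@proj1_sig _ _) l) Hk). simpl. intros j Hj. apply Hk; auto.
  - exists (flat_map (fun k => map (fun j : J => snd (proj1_sig j)) (snd (proj1_sig k))) L).
    intros z [a [b [Pa [Qb ->]]]].
    destruct (HL a Pa) as [k [Hk Ha]].
    destruct k as [[a0 lj] [Pa0 [Hin Hcv]]]. simpl in *.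
    destruct (Hcv b Qb) as [j [Hj Hb]].
    exists (snd (proj1_sig j)). split.
    + apply in_flat_map. eexists; split; [exact Hk|]. simpl. apply (in_map (fun j : J => snd (proj1_sig j))); auto.
    + pose proof (Ha j Hj) as Haj. destruct j as [[[U V] i] [HU [HV Hs]]]. simpl in *. apply Hs; auto.
Qed.



Section Grp.
Context {G : Type} (gr : Group G).
Notation "a * b" := (mul gr a b).
Notation "a ^-1" := (inv gr a) (at level 3).
Notation e := (one gr).

Lemma mulgV a : a * a^-1 = e.
Proof.
  rewrite <- (mul1g gr (a * a^-1)).
  rewrite <- (mulVg gr (a^-1)) at 1.
  rewrite <- mulA, (mulA gr (a^-1) a (a^-1)), mulVg, mul1g. apply mulVg.
Qed.

Lemma mulg1 a : a * e = a.
Proof. rewrite <- (mulVg gr a), mulA, mulgV, mul1g. reflexivity. Qed.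

Lemma inv_uniq a b : a * b = e -> a = b^-1.
Proof. intro E. rewrite <- (mulg1 a), <- (mulgV b), mulA, E, mul1g. reflexivity. Qed.

Lemma invK a : (a^-1)^-1 = a.
Proof. symmetry; apply inv_uniq, mulgV. Qed.

Lemma inv1 : e^-1 = e.
Proof. symmetry; apply inv_uniq, mul1g. Qed.

Lemma invM a b : (a * b)^-1 = b^-1 * a^-1.
Proof. symmetry; apply inv_uniq. rewrite <- mulA, (mulA gr (a^-1) a b), mulVg, mul1g, mulVg. reflexivity. Qed.

Lemma mulKg a b : a^-1 * (a * b) = b.
Proof. rewrite mulA, mulVg, mul1g; reflexivity. Qed.
Lemma mulKVg a b : a * (a^-1 * b) = b.
Proof. rewrite mulA, mulgV, mul1g; reflexivity. Qed.

Context (H : G -> Prop) (Hsub : subgroup gr H).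

Lemma proj_eq a b : proj gr H a = proj gr H b <-> H (a^-1 * b).
Proof.
  destruct Hsub as [H1 [HM HV]].
  split.
  - intro E. assert (E2 : coset gr H a = coset gr H b) by (apply (f_equal (@proj1_sig _ _) E)).
    assert (coset gr H b b) by (unfold coset; rewrite mulVg; auto).
    rewrite <- E2 in H0. exact H0.
  - intro Hab. unfold proj. apply subset_eq_compat. apply functional_extensionality; intro y.
    apply propositional_extensionality. unfold coset. split; intro Hy.
    + assert (E : b^-1 * y = (a^-1 * b)^-1 * (a^-1 * y)).
      { rewrite invM, invK, <- mulA, mulKVg. reflexivity. }
      rewrite E. auto.
    + assert (E : a^-1 * y = (a^-1 * b) * (b^-1 * y)).
      { rewrite <- mulA, mulKVg. reflexivity. }
      rewrite E. auto.
Qed.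

Lemma proj_surj (z : GmodH gr H) : exists a, z = proj gr H a.
Proof.
  destruct z as [C [a E]]. exists a. unfold proj. apply subset_eq_compat. exact E.
Qed.

Lemma proj_one a : proj gr H a = proj gr H e <-> H a.
Proof.
  destruct Hsub as [H1 [HM HV]].
  rewrite proj_eq, mulg1. split; intro Ha; [rewrite <- invK|]; auto.
Qed.
End Grp.


Section Slice.
Context {G : Type} (gr : Group G) (H : G -> Prop) (Hsub : subgroup gr H).
Context {X : Type} (act : G -> X -> X)
  (act1 : forall x, act (one gr) x = x) (actM : forall g h x, act (mul gr g h) x = act g (act h x)).

Lemma act_invl g x : act (inv gr g) (act g x) = x.
Proof. rewrite <- actM, mulVg, act1; reflexivity. Qed.
Lemma act_invr g x : act g (act (inv gr g) x) = x.
Proof. rewrite <- actM, mulgV, act1; reflexivity. Qed.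

Lemma fS_act (S : X -> Prop) :
  (forall g, ~ H g -> forall s, S s -> ~ S (act g s)) ->
  forall g s, S s -> slicing_map gr H act S (act g s) = proj gr H g.
Proof.
  intros H3 g s Ss. unfold slicing_map.
  destruct (epsilon_spec (inhabits (one gr)) (fun g' => exists s', S s' /\ act g' s' = act g s)
     (ex_intro _ g (ex_intro _ s (conj Ss eq_refl)))) as [s' [Ss' E]].
  set (g' := epsilon _ _) in *.
  apply (proj_eq gr H Hsub). apply NNPP; intro nH.
  apply (H3 _ nH s Ss). rewrite actM, <- E, act_invl. exact Ss'.
Qed.


Lemma fS_char (S : X -> Prop) :
  (forall x, H_saturation H act S x <-> S x) ->
  (forall g, ~ H g -> forall s, S s -> ~ S (act g s)) ->
  (forall x, saturation act S x) ->
  forall x g, slicing_map gr H act S x = proj gr H g <-> S (act (inv gr g) x).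
Proof.
  intros H1 H3 Hgl x g. split.
  - destruct (Hgl x) as [k [s [Ss ->]]]. rewrite fS_act; auto.
    intro E. apply (proj_eq gr H Hsub) in E.
    apply H1. exists (mul gr (inv gr g) k), s. split; [|split; [auto|]].
    + destruct Hsub as [_ [_ HV]]. apply HV in E. rewrite invM, invK in E. exact E.
    + rewrite actM. reflexivity.
  - intro Hs. rewrite <- (act_invr g x) at 1. apply fS_act; auto.
Qed.
End Slice.


Lemma part_a (G : Type) (gr : Group G) (opG : (G -> Prop) -> Prop) :
  is_topology opG -> topological_group gr opG ->
  forall (X : Type) (opX : (X -> Prop) -> Prop) (act : G -> X -> X),
  is_topology opX -> is_action gr opG opX act ->
  forall (H : G -> Prop), subgroup gr H ->
  forall S : X -> Prop,
        global_H_slice H opX act S -> small opG opX act S ->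
        continuous opX (@quot_open G gr opG H) (slicing_map gr H act S) /\
        open_map opX (@quot_open G gr opG H) (slicing_map gr H act S) /\
        (is_compact opX S ->
           closed_map opX (@quot_open G gr opG H) (slicing_map gr H act S)).
Proof.
  intros HtG [Hmul Hinv] X opX act HtX [Hact [act1 actM]] H Hsub S [[H1 [[C [HC HSC]] [H3 H4]]] Hgl] Hsmall.
  assert (Hchar := fS_char gr H Hsub act act1 actM S H1 H3 Hgl).
  assert (Hfa := fS_act gr H Hsub act act1 actM S H3).
  assert (SC : forall x, S x <-> C x) by (intro x; apply HSC, Hgl).
  split; [|split].
  -
    intros V HV. unfold quot_open in HV. apply (op_local opX HtX). intros x0 Vx0.
    destruct (Hsmall x0) as [N [[U0 [HU0 [U0x0 U0N]]] Hthin]].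
    set (Winv := fun c => V (proj gr H (inv gr c))).
    assert (HWinv : opG Winv) by (apply (Hinv (fun g => V (proj gr H g))); exact HV).
    set (I := {p : (G -> Prop) * (X -> Prop) | opG (fst p) /\ opX (snd p) /\ snd p x0 /\
               forall a b, fst p a -> snd p b -> ~ C (act a b)}).
    destruct (Hthin (option I) (fun o => match o with None => Winv | Some p => fst (proj1_sig p) end)) as [l Hl].
    + intros [[p [? ?]]|]; auto.
    + intros c _. destruct (classic (Winv c)) as [Hw|Hw]; [exists None; auto|].
      assert (nC : ~ C (act c x0)).
      { intro Cc. apply SC in Cc. rewrite <- (invK gr c) in Cc. apply Hchar in Cc.
        apply Hw. unfold Winv. rewrite <- Cc. exact Vx0. }
      destruct (Hact (fun x => ~ C x) HC c x0 nC) as [U [M [HU [HM [Uc [Mx0 HUM]]]]]].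
      exists (Some (exist _ (U, M) (conj HU (conj HM (conj Mx0 HUM))))). simpl. exact Uc.
    + exists (fun x => U0 x /\ forall i, In i l -> match i with None => True | Some p => snd (proj1_sig p) x end).
      split; [|split].
      * apply (op_and opX HtX); auto. apply (op_finite_inter opX HtX).
        intros [[p [? [? ?]]]|] _; [auto|apply (op_true opX HtX)].
      * split; auto. intros [[p [? [? [? ?]]]]|] _; simpl; auto.
      * intros x [U0x Hx]. destruct (Hgl x) as [g [s [Ss ->]]]. rewrite Hfa; auto.
        apply NNPP; intro nV.
        assert (Kg : closure opG (transporter act N S) (inv gr g)).
        { apply sub_closure. exists (act g s). split; [apply U0N; auto|]. rewrite act_invl; auto. }
        destruct (Hl _ Kg) as [[p|] [Hi Fi]].
        -- specialize (Hx _ Hi). destruct p as [[U M] [HU [HM [Mx0 HUM]]]]. simpl in *.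
           apply (HUM _ _ Fi Hx). rewrite act_invl by auto. apply SC; auto.
        -- apply nV. unfold Winv in Fi. rewrite invK in Fi. exact Fi.
  -
    intros U HU. unfold quot_open. apply (op_local opG HtG). intros g0 [x0 [Ux0 E]].
    apply Hchar in E. set (s0 := act (inv gr g0) x0) in *.
    exists (fun g => U (act g s0)). split; [|split].
    + apply (cont2_l opG opX opX act HtG Hact s0 U HU).
    + unfold s0. rewrite act_invr; auto.
    + intros g Ug. exists (act g s0). split; auto.
  -
    intros HScomp D HD. unfold is_closed, quot_open. apply (op_local opG HtG). intros g0 Hg0.
    set (I := {p : (G -> Prop) * (X -> Prop) | opG (fst p) /\ opX (snd p) /\ fst p g0 /\
               forall a b, fst p a -> snd p b -> ~ D (act a b)}).
    destruct (HScomp I (fun p => snd (proj1_sig p))) as [l Hl].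
    + intros [p [? [? ?]]]; auto.
    + intros s Ss. assert (nD : ~ D (act g0 s)).
      { intro Ds. apply Hg0. exists (act g0 s). split; auto. }
      destruct (Hact (fun x => ~ D x) HD g0 s nD) as [U [M [HU [HM [Ug0 [Ms HUM]]]]]].
      exists (exist _ (U, M) (conj HU (conj HM (conj Ug0 HUM)))). simpl. exact Ms.
    + exists (fun g => forall i, In i l -> fst (proj1_sig i) g). split; [|split].
      * apply (op_finite_inter opG HtG). intros [p [? [? ?]]] _; auto.
      * intros [p [? [? [? ?]]]] _; auto.
      * intros g Hg [x [Dx E]]. apply Hchar in E.
        destruct (Hl _ E) as [p [Hi Fi]]. specialize (Hg p Hi).
        destruct p as [[U M] [HU [HM [Ug0 HUM]]]]. simpl in *.
        apply (HUM _ _ Hg Fi). rewrite act_invr; auto.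
Qed.


Lemma part_b (G : Type) (gr : Group G) (opG : (G -> Prop) -> Prop) :
  is_topology opG -> hausdorff opG -> topological_group gr opG -> locally_compact opG ->
  forall (X : Type) (opX : (X -> Prop) -> Prop) (act : G -> X -> X),
  is_topology opX -> is_action gr opG opX act ->
  forall (H : G -> Prop), subgroup gr H -> is_compact opG H ->
    (forall f : X -> GmodH gr H,
        continuous opX (@quot_open G gr opG H) f ->
        @equivariant G gr H X act f ->
        let S := fun x => f x = proj gr H (one gr) in
        global_H_slice H opX act S /\
        small opG opX act S /\
        slicing_map gr H act S = f).
Proof.
  intros HtG Hh [Hmul Hinv] Hlc X opX act HtX [Hact [act1 actM]] H Hsub HHc f Hfc Heqv S.
  assert (Hfe : forall x, exists k, f x = proj gr H k) by (intro x; apply proj_surj).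
  assert (Sact : forall g s, S s -> f (act g s) = proj gr H g).
  { intros g s Ss. rewrite (Heqv g s (one gr) Ss), mulg1. reflexivity. }
  assert (Hdec : forall x, exists k s, S s /\ x = act k s).
  { intro x. destruct (Hfe x) as [k Ek]. exists k, (act (inv gr k) x). split.
    - unfold S. rewrite (Heqv _ _ _ Ek), mulVg. reflexivity.
    - rewrite act_invr; auto. }
  assert (HSp : forall g, proj gr H g = proj gr H (one gr) <-> H g) by (intro; apply proj_one; auto).
  assert (H3 : forall g, ~ H g -> forall s, S s -> ~ S (act g s)).
  { intros g nH s Ss Sgs. apply nH, HSp. unfold S in Sgs. rewrite Sact in Sgs; auto. }
  assert (Hglob : global_H_slice H opX act S).
  { split; [split; [|split; [|split]]|].
    - intro x; split.
      + intros [h [s [Hh' [Ss ->]]]]. unfold S. rewrite Sact; auto. apply HSp; auto.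
      + intro Sx. exists (one gr), x. rewrite act1. split; auto. apply Hsub.
    - exists S. split; [|tauto]. unfold is_closed.
      apply (Hfc (fun z => z <> proj gr H (one gr))). unfold quot_open.
      apply (op_ext opG (fun g => ~ H g)).
      + apply compact_closed; auto.
      + intro g. rewrite HSp. tauto.
    - exact H3.
    - apply (op_ext opX (fun _ => True)); [apply HtX|]. intro x; split; auto. intros _.
      destruct (Hdec x) as [k [s [Ss E]]]. exists k, s; auto.
    - intro x. destruct (Hdec x) as [k [s [Ss E]]]. exists k, s; auto. }
  split; [exact Hglob|split].
  - intros x0. destruct (Hfe x0) as [k Ek].
    destruct (Hlc k) as [K [HKc [V [HV [Vk VK]]]]].
    exists (fun x => exists v, V v /\ f x = proj gr H v). split.
    + exists (fun x => exists v, V v /\ f x = proj gr H v). split; [|split; [exists k; auto|auto]].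
      apply (Hfc (fun z => exists v, V v /\ z = proj gr H v)). unfold quot_open.
      apply (op_local opG HtG). intros g [v [Vv E]].
      apply (proj_eq gr H Hsub) in E.
      exists (fun g' => V (mul gr g' (mul gr (inv gr g) v))). split; [|split].
      * apply (cont2_l opG opG opG (mul gr) HtG Hmul). exact HV.
      * rewrite mulKVg. exact Vv.
      * intros g' Vg'. eexists; split; [exact Vg'|]. apply (proj_eq gr H Hsub). rewrite mulKg. exact E.
    + unfold thin. apply (closure_compact opG HtG _ (fun z => exists a b, H a /\ K (inv gr b) /\ z = mul gr a b)); auto.
      * apply (compact_image2 opG opG opG (mul gr) HtG HtG Hmul); auto.
        intros I F HF Hcov.
        destruct (HKc I (fun i c => F i (inv gr c))) as [l Hl].
        -- intro i. apply Hinv, HF.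
        -- intros c Kc. apply Hcov. rewrite invK; auto.
        -- exists l. intros c Kc. destruct (Hl _ Kc) as [i [Hi Fi]]. rewrite invK in Fi. eauto.
      * intros g [u [[v [Vv Ev]] Sgu]]. unfold S in Sgu. rewrite (Heqv _ _ _ Ev) in Sgu.
        apply HSp in Sgu. exists (mul gr g v), (inv gr v). split; [auto|split].
        -- rewrite invK; auto.
        -- rewrite <- mulA, mulgV, mulg1. reflexivity.
  - apply functional_extensionality. intro x. destruct (Hdec x) as [k [s [Ss ->]]].
    rewrite fS_act; auto. rewrite Sact; auto.
Qed.



Theorem theorem2p2 :
  forall (G : Type) (gr : Group G) (opG : (G -> Prop) -> Prop),
    is_topology opG -> hausdorff opG -> completely_regular opG ->
    topological_group gr opG -> locally_compact opG ->
  forall (X : Type) (opX : (X -> Prop) -> Prop) (act : G -> X -> X),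
    is_topology opX -> hausdorff opX -> completely_regular opX ->
    is_action gr opG opX act ->
    proper_space opG opX act ->
  forall (H : G -> Prop),
    subgroup gr H -> is_compact opG H ->
    (* (a) *)
    (forall S : X -> Prop,
        global_H_slice H opX act S -> small opG opX act S ->
        continuous opX (@quot_open G gr opG H) (slicing_map gr H act S) /\
        open_map opX (@quot_open G gr opG H) (slicing_map gr H act S) /\
        (is_compact opX S ->
           closed_map opX (@quot_open G gr opG H) (slicing_map gr H act S))) /\
    (* (b) *)
    (forall f : X -> GmodH gr H,
        continuous opX (@quot_open G gr opG H) f ->
        @equivariant G gr H X act f ->
        let S := fun x => f x = proj gr H (one gr) in
        global_H_slice H opX act S /\
        small opG opX act S /\
        slicing_map gr H act S = f).
Proof.
  intros G gr opG HtG HhG HcrG HtgG HlcG X opX act HtX HhX HcrX Hact Hprop H Hsub HHc.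
  split.
  - intros S Hgl Hsm. exact (part_a G gr opG HtG HtgG X opX act HtX Hact H Hsub S Hgl Hsm).
  - exact (part_b G gr opG HtG HhG HtgG HlcG X opX act HtX Hact H Hsub HHc).
Qed.
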